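(* Let $S \subseteq \mathbb{R}^n$ be nonempty, closed and convex, let $F = (F_1,\dots,F_m)^\top \colon S \to \mathbb{R}^m$ be continuous with each $F_i$ strictly convex, let $\ell > 0$, and let \[ u_\ell(x) := \max_{y \in S} \min_{i = 1,\dots,m} \left\{F_i(x) - F_i(y) - \frac{\ell}{2}\|x - y\|^2\right\}, \quad x\in S. \] If $x \in S$ is a stationary point of $\min_{x \in S} u_\ell(x)$, i.e., $u_\ell'(x; z - x) \ge 0$ for all $z \in S$, then $x$ is Pareto optimal for $\min_{x\in S} F(x)$.
   Context: $u_\ell'(x;d) := \lim_{t\searrow 0}(u_\ell(x+td)-u_\ell(x))/t$ (directional derivative). A point $x^\ast \in S$ is Pareto optimal for $\min_{x\in S} F(x)$ if there is no $x \in S$ with $F_i(x) \le F_i(x^\ast)$ for all $i$ and $F(x) \neq F(x^\ast)$. *)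

(* Defs.v *)
From HB Require Import structures.
From mathcomp Require Import all_boot all_order all_algebra.
From mathcomp Require Import all_classical all_reals all_analysis.
Set Implicit Arguments. Unset Strict Implicit. Unset Printing Implicit Defensive.
Import Order.TTheory GRing.Theory Num.Theory.
Import numFieldNormedType.Exports.
Local Open Scope classical_set_scope.
Local Open Scope ring_scope.

Definition sqnorm {R : realType} {n : nat} (x : 'rV[R]_n) : R :=
  \sum_(i < n) (x ord0 i) ^+ 2.

Definition is_convex_set {R : realType} {n : nat} (S : set 'rV[R]_n) : Prop :=
  forall x y t, S x -> S y -> 0 <= t <= 1 -> S (t *: x + (1 - t) *: y).

Definition strictly_convex_on {R : realType} {n : nat}
  (S : set 'rV[R]_n) (f : 'rV[R]_n -> R) : Prop :=
  forall x y t, S x -> S y -> x <> y -> 0 < t < 1 ->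
    f (t *: x + (1 - t) *: y) < t * f x + (1 - t) * f y.

Definition minI {R : realType} {m : nat} (g : 'I_m -> R) : R :=
  inf (range g).

(* u_l(x) = max_{y in S} min_i { F_i(x) - F_i(y) - l/2 ||x-y||^2 }
   (written as a supremum; the max is attained under the hypotheses) *)
Definition u_ell {R : realType} {n m : nat} (S : set 'rV[R]_n)
  (F : 'I_m -> 'rV[R]_n -> R) (l : R) (x : 'rV[R]_n) : R :=
  sup [set v | exists2 y, S y &
        v = minI (fun i => F i x - F i y - l / 2 * sqnorm (x - y))].

Definition has_dir_deriv {R : realType} {n : nat}
  (f : 'rV[R]_n -> R) (x d : 'rV[R]_n) (L : R) : Prop :=
  (fun t : R => (f (x + t *: d) - f x) / t) @ (0 : R)^'+ --> L.

Definition pareto_optimal {R : realType} {n m : nat} (S : set 'rV[R]_n)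
  (F : 'I_m -> 'rV[R]_n -> R) (xs : 'rV[R]_n) : Prop :=
  S xs /\ ~ (exists2 x, S x &
      (forall i, F i x <= F i xs) /\ ~ (forall i, F i x = F i xs)).

(* Main.v *)
Require Import Defs.
From mathcomp Require Import all_boot all_order all_algebra.
From mathcomp Require Import all_classical all_reals all_analysis.
From mathcomp Require Import ring lra.
Import Order.TTheory GRing.Theory Num.Theory.
Import numFieldNormedType.Exports.
Local Open Scope classical_set_scope.
Local Open Scope ring_scope.
Set Implicit Arguments. Unset Strict Implicit.

Lemma sup_max (R : realType) (E : set R) v : E v -> (forall w, E w -> w <= v) -> sup E = v.
Proof.
move=> Ev ub; apply/le_anti/andP; split.
  by apply: ge_sup; [exists v|move=> w /ub].
by apply: ub_le_sup => //; exists v => w /ub.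
Qed.

Lemma minI_ex (R : realType) m (g : 'I_m -> R) (i0 : 'I_m) :
  exists j, minI g = g j /\ forall i, g j <= g i.
Proof.
have [j _ hj] := @arg_minP _ R _ i0 xpredT g isT.

exists j; split => [|i]; last by apply: hj.
rewrite /minI /inf; apply: (canLR (@opprK _)) => /=.
apply: sup_max; first by exists (g j) => //; exists j.
by move=> w [_ [i _ <-] <-]; rewrite lerN2; apply: hj.
Qed.

Lemma minI_le (R : realType) m (g : 'I_m -> R) i : minI g <= g i.
Proof. by have [j [-> h]] := minI_ex g i. Qed.

Lemma minI_ge (R : realType) m (g : 'I_m -> R) (i0 : 'I_m) c :
  (forall i, c <= g i) -> c <= minI g.
Proof. by have [j [-> h]] := minI_ex g i0 => /(_ j). Qed.
Lemma ballE (R : realType) n (x y : 'rV[R]_n) e : ball x e y -> forall j, `|x ord0 j - y ord0 j| < e.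
Proof. move=> [e0 H] j. have := H ord0 j. by rewrite /ball /=. Qed.

Lemma sqnorm_ge0 (R : realType) n (v : 'rV[R]_n) : 0 <= sqnorm v.
Proof. by apply: sumr_ge0 => i _; rewrite sqr_ge0. Qed.

Lemma sqnorm_conv (R : realType) n (a b : 'rV[R]_n) t :
  sqnorm (t *: a + (1 - t) *: b) = t * sqnorm a + (1 - t) * sqnorm b - t * (1 - t) * sqnorm (a - b).
Proof.
rewrite /sqnorm !mulr_sumr -big_split -sumrB /=; apply: eq_bigr => i _.
rewrite !mxE; ring.
Qed.

Lemma sqnorm_sym (R : realType) n (a b : 'rV[R]_n) : sqnorm (a - b) = sqnorm (b - a).
Proof. by rewrite /sqnorm; apply: eq_bigr => i _; rewrite !mxE; ring. Qed.

Lemma sqnorm0 (R : realType) n : sqnorm (0 : 'rV[R]_n) = 0.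
Proof. by rewrite /sqnorm big1 // => i _; rewrite mxE expr0n. Qed.

Lemma sqnormZ (R : realType) n (a : 'rV[R]_n) s : sqnorm (s *: a) = s ^+ 2 * sqnorm a.
Proof. by rewrite /sqnorm mulr_sumr; apply: eq_bigr => i _; rewrite !mxE; ring. Qed.

Lemma sqnorm_coord (R : realType) n (a : 'rV[R]_n) j : (a ord0 j) ^+ 2 <= sqnorm a.
Proof.
rewrite /sqnorm (bigD1 j) //= lerDl; apply: sumr_ge0 => i _; exact: sqr_ge0.
Qed.

Lemma sqnorm_addle (R : realType) n (p q : 'rV[R]_n) b : 0 < b ->
  sqnorm (p + q) <= (1 + b^-1) * sqnorm p + (1 + b) * sqnorm q.
Proof.
move=> b0; rewrite /sqnorm !mulr_sumr -big_split /=; apply: ler_sum => i _.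
rewrite !mxE; set u := p ord0 i; set v := q ord0 i.
have -> : (1 + b^-1) * u ^+ 2 + (1 + b) * v ^+ 2 = (u + v) ^+ 2 + b^-1 * (u - b * v) ^+ 2.
  by field; rewrite gt_eqF.
by rewrite lerDl; apply: mulr_ge0; [rewrite invr_ge0 ltW | exact: sqr_ge0].
Qed.

Definition phi (R : realType) n m (F : 'I_m -> 'rV[R]_n -> R) (l : R) (w y : 'rV[R]_n) :=
  minI (fun i => F i w - F i y - l / 2 * sqnorm (w - y)).

Lemma convex_le (R : realType) n (S : set 'rV[R]_n) f a b t :
  strictly_convex_on S f -> S a -> S b -> 0 <= t <= 1 ->
  f (t *: a + (1 - t) *: b) <= t * f a + (1 - t) * f b.
Proof.
move=> hf Sa Sb /andP[t0 t1].
have [->|ab] := eqVneq a b.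
  by rewrite -scalerDl addrCA subrr addr0 scale1r -mulrDl addrCA subrr addr0 mul1r.
have [->|tn0] := eqVneq t 0.
  by rewrite scale0r add0r subr0 scale1r mul0r add0r mul1r.
have [->|tn1] := eqVneq t 1.
  by rewrite scale1r subrr scale0r addr0 mul1r mul0r addr0.
apply/ltW/hf => //; first by apply/eqP.
by rewrite lt_neqAle eq_sym tn0 t0 lt_neqAle tn1 t1.
Qed.

Lemma phi_concave (R : realType) n m (S : set 'rV[R]_n) (F : 'I_m -> 'rV[R]_n -> R) l x y1 y2 s (i0 : 'I_m) :
  (forall i, strictly_convex_on S (F i)) -> S y1 -> S y2 -> 0 <= s <= 1 ->
  s * phi F l x y1 + (1 - s) * phi F l x y2 + l / 2 * (s * (1 - s)) * sqnorm (y1 - y2)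
  <= phi F l x (s *: y1 + (1 - s) *: y2).
Proof.
move=> hF S1 S2 /andP[s0 s1]; rewrite [X in _ <= X]/phi; apply: (minI_ge i0) => i.
have -> : x - (s *: y1 + (1 - s) *: y2) = s *: (x - y1) + (1 - s) *: (x - y2).
  by apply/rowP => j; rewrite !mxE; ring.
rewrite sqnorm_conv.
have -> : x - y1 - (x - y2) = - (y1 - y2) by apply/rowP => j; rewrite !mxE; ring.
have -> : sqnorm (- (y1 - y2)) = sqnorm (y1 - y2) by rewrite -sqnorm_sym; congr sqnorm; apply/rowP => j; rewrite !mxE; ring.
have hc := convex_le (hF i) S1 S2 (introT andP (conj s0 s1)).
have h1 := minI_le (fun i => F i x - F i y1 - l / 2 * sqnorm (x - y1)) i.
have h2 := minI_le (fun i => F i x - F i y2 - l / 2 * sqnorm (x - y2)) i.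
rewrite /phi; set A := minI _ in h1 *; set B := minI _ in h2 *.
have s1' : 0 <= 1 - s by rewrite subr_ge0.
have e1 := ler_wpM2l s0 h1. have e2 := ler_wpM2l s1' h2.
move: hc e1 e2; set P := F i (_ + _); set N1 := sqnorm (x - y1); set N2 := sqnorm (x - y2); set N3 := sqnorm (y1 - y2).
move=> hc e1 e2. 
have -> : F i x - P - l / 2 * (s * N1 + (1 - s) * N2 - s * (1 - s) * N3) =
  (F i x - P) - l / 2 * (s * N1 + (1 - s) * N2) + l / 2 * (s * (1 - s)) * N3 by ring.
rewrite lerD2r.
have : F i x - P >= s * (F i x - F i y1) + (1 - s) * (F i x - F i y2).
  by move: hc; rewrite !mulrBr; lra.
move: e1 e2; rewrite !mulrBr; lra.
Qed.

Lemma sqnorm_cont (R : realType) n (x : 'rV[R]_n) : continuous (fun y : 'rV[R]_n => sqnorm (x - y)).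
Proof.
move=> p; rewrite /sqnorm.
apply: (cvg_big (@add_continuous R^o)); first exact: nbhs_filter.
move=> i _.
under eq_cvg do rewrite !mxE expr2.
rewrite !mxE expr2.
have hg : continuous (fun y : 'rV[R]_n => x ord0 i - y ord0 i).
  move=> q; exact: (cvgB (cvg_cst _) (@coord_continuous R 1 n ord0 i q)).
exact: (cvgM (hg p) (hg p)).
Qed.

Lemma within_cont (R : realType) n (S : set 'rV[R]_n) (f : 'rV[R]_n -> R) p :
  {within S, continuous f} -> S p -> f @ within S (nbhs p) --> f p.
Proof. by move=> hc Sp; apply: (proj1 (subspace_continuousP _ _) hc). Qed.

Lemma phi_xx (R : realType) n m (F : 'I_m -> 'rV[R]_n -> R) l x (i0 : 'I_m) : phi F l x x = 0.
Proof.
rewrite /phi; have [j [-> _]] := minI_ex (fun i => F i x - F i x - l / 2 * sqnorm (x - x)) i0.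
by rewrite !subrr sqnorm0 mulr0 subrr.
Qed.

Lemma phi_le_term (R : realType) n m (F : 'I_m -> 'rV[R]_n -> R) l x y i : 0 < l ->
  phi F l x y <= F i x - F i y.
Proof.
move=> l0; apply: le_trans (minI_le _ i) _ => /=.
rewrite gerBl; apply: mulr_ge0; [by rewrite divr_ge0 // ltW | exact: sqnorm_ge0].
Qed.

Lemma phi_bounded (R : realType) n m (S : set 'rV[R]_n) (F : 'I_m -> 'rV[R]_n -> R) l x (i0 : 'I_m) :
  0 < l -> is_convex_set S -> (forall i, strictly_convex_on S (F i)) ->
  (forall i, {within S, continuous (F i)}) -> S x ->
  exists M, forall y, S y -> phi F l x y <= M.
Proof.
move=> l0 cS hF hc Sx.
have := within_cont (hc i0) Sx.
move/cvgrPdist_lt => /(_ 1 ltr01); rewrite near_withinE => /nbhs_ballP [e e0 he].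
set a := Num.min e 1.
have a0 : 0 < a by rewrite lt_min e0 ltr01.
have ae : a <= e by rewrite ge_min lexx.
have a1 : a <= 1 by rewrite ge_min lexx orbT.
exists (2 / a + 4 / (l * a ^+ 2)) => y Sy.
set Q := sqnorm (y - x).
have Q0 : 0 <= Q by exact: sqnorm_ge0.
set r := Num.sqrt Q.
have r0 : 0 <= r by exact: sqrtr_ge0.
have rQ : r ^+ 2 = Q by rewrite sqr_sqrtr.
set s := a / (2 * (1 + r)).
have r1 : 0 < 2 * (1 + r) by rewrite mulr_gt0 // ltr_pwDl.
have s0 : 0 < s by rewrite divr_gt0.
have hs : s * (2 * (1 + r)) = a by rewrite /s divfK // gt_eqF.
have s12 : s <= 1 / 2 by nra.
set y' := s *: y + (1 - s) *: x.
have Sy' : S y' by apply: cS => //; rewrite (ltW s0) /=; lra.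
have By' : ball x e y'.
  split => // i j; rewrite (ord1 i) /ball /=.
  have -> : x ord0 j - y' ord0 j = s * (x ord0 j - y ord0 j) by rewrite !mxE; ring.
  rewrite normrM gtr0_norm //.
  have hd : `|x ord0 j - y ord0 j| <= r.
    rewrite -sqrtr_sqr; apply: ler_wsqrtr.
    have -> : (x ord0 j - y ord0 j) ^+ 2 = ((y - x) ord0 j) ^+ 2 by rewrite !mxE; ring.
    exact: sqnorm_coord.
  have : s * `|x ord0 j - y ord0 j| <= s * r by rewrite ler_wpM2l // ltW.
  nra.
have hF1 : F i0 x - F i0 y' < 1.
  by apply: le_lt_trans (ler_norm _) _; apply: he.
have hp : phi F l x y' < 1 by apply: le_lt_trans (phi_le_term _ _ _ _ l0) hF1.
have hcv := @phi_concave _ _ _ S F l x y x s i0 hF Sy Sx (introT andP (conj (ltW s0) (le_trans s12 _))).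
rewrite phi_xx // mulr0 addr0 -/Q in hcv.
have h121 : (1 / 2 : R) <= 1 by rewrite ler_pdivrMr // mul1r ler1n.
have {}hcv := hcv h121.
set P := phi F l x y in hcv *.
have h1 : s * P + l / 4 * s * Q < 1.
  have : l / 4 * s * Q <= l / 2 * (s * (1 - s)) * Q.
    apply: ler_wpM2r => //.
    have h : 0 <= l * s * (1 / 2 - s) by rewrite mulr_ge0 ?subr_ge0 // ltW // mulr_gt0.
    rewrite -subr_ge0.
    have -> : l / 2 * (s * (1 - s)) - l / 4 * s = l * s * (1 / 2 - s) / 2 by field.
    by rewrite divr_ge0.
  move: hcv hp; rewrite -/y'; lra.
have e2 : (s * P + l / 4 * s * Q) * (2 * (1 + r)) = a * P + l / 4 * a * Q by rewrite -hs; ring.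
have h2 : (s * P + l / 4 * s * Q) * (2 * (1 + r)) < 1 * (2 * (1 + r)) by rewrite ltr_pM2r.
rewrite e2 mul1r -rQ in h2.
have la : 0 < l * a by rewrite mulr_gt0.
have h3 : 2 * r - l / 4 * a * r ^+ 2 <= 4 / (l * a).
  rewrite -subr_ge0.
  have -> : 4 / (l * a) - (2 * r - l / 4 * a * r ^+ 2) = (l * a / 4) * (r - 4 / (l * a)) ^+ 2.
    by field; rewrite !gt_eqF.
  by rewrite mulr_ge0 ?sqr_ge0 // divr_ge0 // ltW.
have -> : 2 / a + 4 / (l * a ^+ 2) = (2 + 4 / (l * a)) / a by field; rewrite !gt_eqF.
rewrite ler_pdivlMr //. lra.
Qed.

Lemma abs_lt_of_sq (R : realType) (d eps : R) : 0 < eps -> d ^+ 2 < eps ^+ 2 -> `|d| < eps.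
Proof.
move=> e0 h; rewrite ltNge; apply/negP => hle.
have := real_normK (num_real d); move=> hd.
have : eps ^+ 2 <= `|d| ^+ 2 by rewrite ler_pXn2r // ?nnegrE ltW // (lt_le_trans e0 hle).
lra.
Qed.

Lemma phi_max (R : realType) n m (S : set 'rV[R]_n) (F : 'I_m -> 'rV[R]_n -> R) l x (i0 : 'I_m) :
  0 < l -> closed S -> is_convex_set S -> (forall i, strictly_convex_on S (F i)) ->
  (forall i, {within S, continuous (F i)}) -> S x ->
  exists2 p, S p & forall y, S y -> phi F l x y <= phi F l x p.
Proof.
move=> l0 clS cS hF hc Sx.
have [M hM] := phi_bounded i0 l0 cS hF hc Sx.
set E := [set v | exists2 y, S y & v = phi F l x y].
have hE : has_sup E.
  split; first by exists (phi F l x x); exists x.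
  by exists M => v [y Sy ->]; exact: hM.
set u := sup E.
have ub : forall y, S y -> phi F l x y <= u.
  by move=> y Sy; apply: sup_upper_bound => //; exists y.
set B := fun e : R => [set y | S y /\ u - e < phi F l x y].
set G := filter_from (fun e : R => 0 < e) B.
have GF : ProperFilter G.
  apply: filter_from_proper.
    apply: filter_from_filter; first by exists 1; exact: ltr01.
    move=> i j i0' j0'; exists (Num.min i j); first by rewrite lt_min i0' j0'.
    move=> y [Sy h]; split; split => //; apply: le_lt_trans h; rewrite lerD2l lerN2 ge_min lexx ?orbT //.
  move=> e e0; have [v [y Sy ->] hv] := sup_adherent e0 hE; by exists y.
have GS : G S by exists 1; [exact: ltr01 | move=> y []].
have Gc : cauchy G.
  apply: cauchy_exP => eps eps0.
  set eta := l * eps ^+ 2 / 8.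
  have eta0 : 0 < eta by rewrite divr_gt0 // mulr_gt0 // exprn_gt0.
  have [v [y0 Sy0 ->] hv] := sup_adherent eta0 hE.
  exists y0; exists eta => // y [Sy hy].
  split => // i j; rewrite (ord1 i) /ball /=.
  have h121 : 0 <= (1 / 2 : R) <= 1.
    by rewrite divr_ge0 //= ler_pdivrMr // mul1r ler1n.
  have hcv := @phi_concave _ _ _ S F l x y0 y (1/2) i0 hF Sy0 Sy h121.
  have Smid : S ((1 / 2) *: y0 + (1 - 1 / 2) *: y) by apply: cS.
  have hu := ub _ Smid.
  set N := sqnorm (y0 - y) in hcv.
  have hN : l * N < l * eps ^+ 2.
    rewrite /eta -/u in hv hy; move: hcv hu hv hy; set a := phi F l x y0; set b := phi F l x y.
    move=> *; lra.
  rewrite ltr_pM2l // in hN.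
  apply: abs_lt_of_sq => //; apply: le_lt_trans hN.
  have -> : (y0 ord0 j - y ord0 j) = (y0 - y) ord0 j by rewrite !mxE.
  exact: sqnorm_coord.
have Gp : G --> lim G by exact: cauchy_cvg.
set p := lim G in Gp.
have Sp : S p by exact: (@closed_cvg _ _ G GF (fun y => y) S clS GS p Gp).
have GW : G --> within S (nbhs p).
  move=> P; rewrite /within /= => hP.
  have : G (fun y => S y -> P y) by apply: Gp.
  move=> hQ; apply: filterS (filterI GS hQ) => y [Sy h]; exact: h.
have term_cvg : forall i, (fun y => F i x - F i y - l / 2 * sqnorm (x - y)) @ G -->
    F i x - F i p - l / 2 * sqnorm (x - p).
  move=> i; apply: cvgB; first apply: cvgB; first exact: cvg_cst.
    exact: (cvg_trans (cvg_app _ GW) (within_cont (hc i) Sp)).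
  apply: cvgM; first exact: cvg_cst.
  exact: (cvg_trans (cvg_app _ Gp) (@sqnorm_cont _ _ x p)).
have hup : u <= phi F l x p.
  apply: (minI_ge i0) => i.
  rewrite leNgt; apply/negP => hlt.
  set t := F i x - F i p - l / 2 * sqnorm (x - p) in hlt.
  have e0 : 0 < (u - t) / 2 by rewrite divr_gt0 // subr_gt0.
  have : u - (u - t) / 2 <= t.
    apply: (@closed_cvg _ _ G GF (fun y => F i x - F i y - l / 2 * sqnorm (x - y)) [set r | u - (u - t) / 2 <= r] (@closed_ge R (u - (u - t) / 2)) _ t (term_cvg i)).
    exists ((u - t) / 2) => // y [Sy hy] /=.
    apply: ltW; apply: lt_le_trans hy _; exact: minI_le.
  lra.
by exists p => // y Sy; apply: le_trans (ub _ Sy) hup.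
Qed.

Lemma key_bound (R : realType) n m (S : set 'rV[R]_n) (F : 'I_m -> 'rV[R]_n -> R) l x p (i0 : 'I_m)
  A eps beta t :
  0 < l -> is_convex_set S -> (forall i, strictly_convex_on S (F i)) -> S x -> S p ->
  (forall y, S y -> phi F l x y <= phi F l x p) ->
  (forall i, A <= F i x - F i p) ->
  l * sqnorm (x - p) - eps / 2 <= A ->
  (forall i, F i ((1 / 2) *: x + (1 - 1 / 2) *: p) <= 1 / 2 * F i x + (1 - 1 / 2) * F i p - eps) ->
  0 < beta -> l * sqnorm (x - p) <= eps * beta -> 0 < eps ->
  0 < t -> t <= 1 / 2 -> t * beta <= 1 / 2 ->
  u_ell S F l (x + t *: (p - x)) <= phi F l x p - t * eps.
Proof.
move=> l0 cS hF Sx Sp hmax hA hAD heps b0 hlD e0 t0 t12 tb.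
have h121 : 0 <= (1 / 2 : R) <= 1 by rewrite divr_ge0 //= ler_pdivrMr // mul1r ler1n.
set q := (1 / 2) *: x + (1 - 1 / 2) *: p.
have Sq : S q by apply: cS.
set D := sqnorm (x - p) in hAD hlD *.
have D0 : 0 <= D by exact: sqnorm_ge0.
apply: ge_sup; first by exists (phi F l (x + t *: (p - x)) x); exists x.
move=> v [y Sy ->].
have [j [hj hjmin]] := minI_ex (fun i => F i x - F i y - l / 2 * sqnorm (x - y)) i0.
have hj' : phi F l x y = F j x - F j y - l / 2 * sqnorm (x - y) := hj.
apply: le_trans (minI_le _ j) _ => /=.
set w := x + t *: (p - x).
have f1 : F j w <= (1 - 2 * t) * F j x + (1 - (1 - 2 * t)) * F j q.
  have -> : w = (1 - 2 * t) *: x + (1 - (1 - 2 * t)) *: q.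
    by apply/rowP => k; rewrite /w /q !mxE; field.
  apply: convex_le => //; apply/andP; split; lra.
have f2 := heps j.
have f3 : sqnorm (w - y) = (1 - t) * sqnorm (x - y) + (1 - (1 - t)) * sqnorm (p - y)
    - (1 - t) * (1 - (1 - t)) * D.
  have -> : w - y = (1 - t) *: (x - y) + (1 - (1 - t)) *: (p - y).
    by apply/rowP => k; rewrite !mxE; ring.
  rewrite sqnorm_conv /D; congr (_ - _ * sqnorm _).
  by apply/rowP => k; rewrite !mxE; ring.
have f4 : sqnorm (x - y) <= (1 + beta^-1) * D + (1 + beta) * sqnorm (p - y).
  have -> : x - y = (x - p) + (p - y) by apply/rowP => k; rewrite !mxE; ring.
  exact: sqnorm_addle.
have f5 : phi F l x y <= phi F l x p - l / 4 * sqnorm (p - y).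
  have hcv := @phi_concave _ _ _ S F l x p y (1/2) i0 hF Sp Sy h121.
  have Smid : S ((1 / 2) *: p + (1 - 1 / 2) *: y) by apply: cS.
  have := hmax _ Smid.
  move: hcv; set a := phi F l x p; set b := phi F l x y; set r := sqnorm (p - y).
  move=> *; lra.
have f6 := hA j.
rewrite f3; move: f1 f2 f4 f5 f6; rewrite hj'.
set r := sqnorm (p - y); set Nxy := sqnorm (x - y); set a := phi F l x p.
have r0 : 0 <= r by exact: sqnorm_ge0.
have Nxy0 : 0 <= Nxy by exact: sqnorm_ge0.
move=> f1 f2 f4 f5 f6.
have g1 : t * Nxy <= t * ((1 + beta^-1) * D + (1 + beta) * r) by rewrite ler_wpM2l // ltW.
have g2 : t * A <= t * (F j x - F j p) by rewrite ler_wpM2l // ltW.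
have g3 : t * (l * D - eps / 2) <= t * A by rewrite ler_wpM2l // ltW.
have g4 : t * beta * r <= 1 / 2 * r by rewrite ler_wpM2r.
have g5 : l * D * beta^-1 <= eps.
  by rewrite ler_pdivrMr // mulrC.
have g6 : t * (l * D * beta^-1) <= t * eps by rewrite ler_wpM2l // ltW.
have g7 : 0 <= t * t * D by rewrite !mulr_ge0 // ltW.
have g8 : beta * beta^-1 = 1 by rewrite mulfV // gt_eqF.
nra.
Qed.

Unset Implicit Arguments. Set Strict Implicit.

Theorem theorem3p8 (R : realType) (n m : nat) (S : set 'rV[R]_n)
  (F : 'I_m -> 'rV[R]_n -> R) (l : R) (x : 'rV[R]_n) :
  S !=set0 -> closed S -> is_convex_set S ->
  (forall i, {within S, continuous (F i)}) ->
  (forall i, strictly_convex_on S (F i)) ->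
  0 < l ->
  S x ->
  (forall z, S z -> exists2 L : R,
      has_dir_deriv (u_ell S F l) x (z - x) L & 0 <= L) ->
  pareto_optimal S F x.
Proof.
move=> _ clS cS hc hF l0 Sx hder.
case: m F hc hF hder => [|m'] F hc hF hder.
  by split => // -[z _ [_ hne]]; apply: hne => -[].
have i0 : 'I_m'.+1 := ord0.
have h121 : 0 <= (1 / 2 : R) <= 1 by rewrite divr_ge0 //= ler_pdivrMr // mul1r ler1n.
have h121' : 0 < (1 / 2 : R) < 1 by rewrite divr_gt0 //= ltr_pdivrMr // mul1r ltr1n.
split => //; move=> [z Sz [hle hne]].
have [k hk] : exists k, F k z < F k x.
  apply: contrapT => hno; apply: hne => i; apply/le_anti; rewrite hle /=.
  rewrite leNgt; apply/negP => h; apply: hno; by exists i.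
have zx : z <> x by move=> ezx; move: hk; rewrite ezx ltxx.
set w0 := (1 / 2) *: z + (1 - 1 / 2) *: x.
have Sw0 : S w0 by apply: cS.
have hw0 : forall i, F i w0 < F i x.
  move=> i; apply: lt_le_trans (hF i z x (1/2) Sz Sx zx h121') _.
  have := hle i; lra.
set c := minI (fun i => F i x - F i w0).
have c0 : 0 < c.
  have [j [hj _]] := minI_ex (fun i => F i x - F i w0) i0.
  by rewrite /c hj subr_gt0.
set N := sqnorm (w0 - x).
have N0 : 0 <= N by exact: sqnorm_ge0.
have cN : 0 < c + l * N by have := mulr_ge0 (ltW l0) N0; lra.
set s := c / (c + l * N).
have hs : s * (c + l * N) = c by rewrite /s divfK // gt_eqF.
have s0 : 0 < s by rewrite divr_gt0.
have s1 : s <= 1 by rewrite /s ler_pdivrMr // mul1r lerDl mulr_ge0 // ltW.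
set y1 := s *: w0 + (1 - s) *: x.
have Sy1 : S y1 by apply: cS => //; rewrite ltW.
have hy1 : 0 < phi F l x y1.
  have sc0 : 0 < s * c / 2 by rewrite divr_gt0 // mulr_gt0.
  apply: lt_le_trans sc0 _; apply: (minI_ge i0) => i.
  have f1 : F i y1 <= s * F i w0 + (1 - s) * F i x.
    by apply: convex_le => //; rewrite (ltW s0).
  have f2 : sqnorm (x - y1) = s ^+ 2 * N.
    have -> : x - y1 = s *: (x - w0) by apply/rowP => j; rewrite !mxE; ring.
    by rewrite sqnormZ sqnorm_sym.
  have f3 : c <= F i x - F i w0 by exact: (minI_le (fun i => F i x - F i w0) i).
  rewrite f2.
  have f4 : s * c <= s * (F i x - F i w0) by rewrite ler_wpM2l // ltW.
  nra.
have [p Sp hp] := phi_max i0 l0 clS cS hF hc Sx.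
have up : u_ell S F l x = phi F l x p.
  by apply: sup_max; [exists p | move=> v [y Sy ->]; exact: hp].
have px : p <> x.
  move=> epx; have := hp _ Sy1; rewrite epx phi_xx //; lra.
set q := (1 / 2) *: x + (1 - 1 / 2) *: p.
have Sq : S q by apply: cS.
have hq : forall i, F i q < 1 / 2 * F i x + (1 - 1 / 2) * F i p.
  by move=> i; apply: hF => //; move=> e; apply: px; rewrite e.
set eps := minI (fun i => 1 / 2 * F i x + (1 - 1 / 2) * F i p - F i q).
have e0 : 0 < eps.
  have [j [hj _]] := minI_ex (fun i => 1 / 2 * F i x + (1 - 1 / 2) * F i p - F i q) i0.
  by rewrite /eps hj subr_gt0.
have heps : forall i, F i q <= 1 / 2 * F i x + (1 - 1 / 2) * F i p - eps.
  move=> i; have := minI_le (fun i => 1 / 2 * F i x + (1 - 1 / 2) * F i p - F i q) i.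
  rewrite -/eps; lra.
set A := minI (fun i => F i x - F i p).
have hA : forall i, A <= F i x - F i p by move=> i; exact: minI_le.
set D := sqnorm (x - p).
have D0 : 0 <= D by exact: sqnorm_ge0.
have hAD : l * D - eps / 2 <= A.
  have eD : 0 < eps + l * D by have := mulr_ge0 (ltW l0) D0; lra.
  set s' := eps / (eps + l * D).
  have hs' : s' * (eps + l * D) = eps by rewrite /s' divfK // gt_eqF.
  have s'0 : 0 < s' by rewrite divr_gt0.
  have s'1 : s' <= 1 by rewrite /s' ler_pdivrMr // mul1r lerDl mulr_ge0 // ltW.
  set ys := s' *: x + (1 - s') *: p.
  have Sys : S ys by apply: cS => //; rewrite ltW.
  have g1 := hp _ Sys.
  have g2 : phi F l x p <= A - l / 2 * D.
    have [j [hj _]] := minI_ex (fun i => F i x - F i p) i0.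
    apply: le_trans (minI_le _ j) _ => /=; rewrite -/D.
    by rewrite /A hj.
  have g3 : (1 - s') * A - l / 2 * ((1 - s') ^+ 2 * D) <= phi F l x ys.
    apply: (minI_ge i0) => i.
    have f1 : F i ys <= s' * F i x + (1 - s') * F i p.
      by apply: convex_le => //; rewrite (ltW s'0).
    have -> : x - ys = (1 - s') *: (x - p) by apply/rowP => j; rewrite !mxE; ring.
    rewrite sqnormZ -/D.
    have : (1 - s') * A <= (1 - s') * (F i x - F i p) by rewrite ler_wpM2l // ?subr_ge0.
    lra.
  have g4 : s' * (l * D - l / 2 * s' * D) <= s' * A by nra.
  rewrite ler_pM2l // in g4.
  have g5 : l * s' * D <= eps by nra.
  lra.
set beta := 1 + l * D / eps.
have b0 : 0 < beta by have := divr_ge0 (mulr_ge0 (ltW l0) D0) (ltW e0); rewrite /beta; lra.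
have hlD : l * D <= eps * beta.
  have -> : eps * beta = eps + l * D by rewrite /beta; field; rewrite gt_eqF.
  by rewrite lerDr ltW.
set delta := Num.min (1 / 2) (1 / (2 * beta)).
have d0 : 0 < delta by rewrite lt_min !divr_gt0 // mulr_gt0.
have hstep : forall t, 0 < t -> t < delta ->
    (u_ell S F l (x + t *: (p - x)) - u_ell S F l x) / t <= - eps.
  move=> t t0 td.
  have t12 : t <= 1 / 2 by apply: ltW; apply: lt_le_trans td _; rewrite ge_min lexx.
  have tb : t * beta <= 1 / 2.
    have : t < 1 / (2 * beta) by apply: lt_le_trans td _; rewrite ge_min lexx orbT.
    rewrite ltr_pdivlMr ?mulr_gt0 // => h.
    have : t * beta * 2 < 1 by rewrite -mulrA [beta * 2]mulrC.
    rewrite -ltr_pdivlMr //; exact: ltW.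
  have := key_bound i0 l0 cS hF Sx Sp hp hA hAD heps b0 hlD e0 t0 t12 tb.
  rewrite up => h.
  rewrite ler_pdivrMr //; lra.
have [L hL L0] := hder p Sp.
have ev : \forall t \near (0 : R)^'+,
    (fun t => (u_ell S F l (x + t *: (p - x)) - u_ell S F l x) / t) t <= - eps.
  near=> t; apply: hstep.
    by near: t; exact: nbhs_right_gt.
  by near: t; exact: nbhs_right_lt.
have := limr_le (cvgP _ hL) ev.
rewrite (cvg_lim (@Rhausdorff R) hL) => hLe.
have := hLe (at_right_proper_filter 0); lra.
Unshelve. all: by end_near.
Qed.
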